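(* Let $x=(x_0x_1)^{-1}$ and $y=x_2xx_2^{-1}$. Then for all $j\ge0$: $x^{2^{2j+1}}=M_{2^{2j+1}-1}([51,89,196],[0,0,0],\dots)$, $y^{2^{2j+1}}=M_{2^{2j+1}-1}([51,89,196],[0,157,106],\dots)$, $x^{2^{2j+2}}=M_{2^{2j+2}-1}([28,235,129],[0,0,0],\dots)$, $y^{2^{2j+2}}=M_{2^{2j+2}-1}([28,235,129],[39,208,186],\dots)$.
   Context: Consider infinite upper unitriangular block matrices $X=(X_{r,s})_{r,s\ge1}$ whose entries are $3\times3$ matrices over $\mathbb F_2$, with $X_{r,r}=I$, $X_{r,s}=0$ for $s<r$, and whose upper diagonals are $3$-periodic: for each $j\ge1$ there are $a_{j1},a_{j2},a_{j3}\in M(3,\mathbb F_2)$ with $X_{r,r+j}=a_{j,i}$, where $i\in\{1,2,3\}$, $i\equiv r\pmod 3$; $a_j=[a_{j1},a_{j2},a_{j3}]$ is the $j$-th upper diagonal. For $l\ge0$, $M_l(c_1,c_2,\dots)$ denotes such a matrix whose first $l$ upper diagonals are zero and whose $(l+1)$-st, $(l+2)$-nd, $\dots$ upper diagonals are $c_1,c_2,\dots$; diagonals hidden in ''$\dots$'' are unspecified, while a matrix written $M_0(c_1,\dots,c_m)$ without dots has all further diagonals zero. A matrix $u=(u_{pq})\in M(3,\mathbb F_2)$ is encoded by the integer $256u_{11}+128u_{12}+64u_{13}+32u_{21}+16u_{22}+8u_{23}+4u_{31}+2u_{32}+u_{33}$, and a diagonal by the triple of integers of its three blocks. The elements are $x_0=M_0([11,11,11],[17,17,17],[26,26,26],[11,11,0],[17,0,0])$,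 $x_1=M_0([23,224,138],[59,136,495],[26,488,227],[23,224,0],[59,0,0])$, $x_2=M_0([46,68,217],[12,194,363],[26,326,77],[46,68,0],[12,0,0])$. *)

(* Defs.v *)
From HB Require Import structures.
From mathcomp Require Import all_boot all_order all_algebra.
Set Implicit Arguments. Unset Strict Implicit. Unset Printing Implicit Defensive.
Import GRing.Theory.
Local Open Scope ring_scope.

Definition blk := 'M['F_2]_3.

(* Infinite block matrices, rows/columns indexed from 0
   (paper's row r >= 1 corresponds to our row r-1). *)
Definition imat := nat -> nat -> blk.

(* Decoding of the integer code 256u11+128u12+...+u33 into a 3x3 matrix. *)
Definition dec (n : nat) : blk :=
  \matrix_(p < 3, q < 3) ((n %/ 2 ^ (8 - (3 * p + q)) %% 2)%N%:R).

(* A diagonal is a triple of codes; block i (0-based, i = paper's index - 1). *)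
Definition dtriple := (nat * nat * nat)%type.
Definition dec_diag (t : dtriple) (i : nat) : blk :=
  match (i %% 3)%N with
  | 0 => dec t.1.1
  | 1 => dec t.1.2
  | _ => dec t.2
  end.

Definition M0 (cs : seq dtriple) : imat :=
  fun r s => if r == s then 1%:M
             else if (r < s)%N then
               (if (s - r <= size cs)%N
                then dec_diag (nth (0,0,0)%N cs (s - r).-1) r else 0)
             else 0.

(* Product of upper triangular infinite matrices (finite sums). *)
Definition imul (X Y : imat) : imat :=
  fun r s => \sum_(r <= t < s.+1) X r t *m Y t s.

Definition ione : imat := fun r s => if r == s then 1%:M else 0.

Definition ipow (X : imat) (n : nat) : imat := iter n (imul X) ione.

(* Inverse of a unitriangular matrix X = I + N: sum_k (-N)^k, which is a
   finite sum entrywise since N is strictly upper triangular. *)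
Definition iinv (X : imat) : imat :=
  let N : imat := fun r s => if r == s then 0 else - X r s in
  fun r s => \sum_(k < (s - r).+1) ipow N k r s.

Definition in_group (X : imat) : Prop :=
  [/\ forall r, X r r = 1%:M,
      forall r s, (s < r)%N -> X r s = 0
    & forall r s, X (r + 3)%N (s + 3)%N = X r s].

Definition isM (l : nat) (cs : seq dtriple) (X : imat) : Prop :=
  [/\ in_group X,
      forall r k, (1 <= k <= l)%N -> X r (r + k)%N = 0
    & forall r k, (1 <= k <= size cs)%N ->
        X r (r + l + k)%N = dec_diag (nth (0,0,0)%N cs k.-1) r].

Definition x0 : imat := M0 [:: (11,11,11); (17,17,17); (26,26,26); (11,11,0); (17,0,0)]%N.
Definition x1 : imat := M0 [:: (23,224,138); (59,136,495); (26,488,227); (23,224,0); (59,0,0)]%N.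
Definition x2 : imat := M0 [:: (46,68,217); (12,194,363); (26,326,77); (46,68,0); (12,0,0)]%N.

Definition xx : imat := iinv (imul x0 x1).
Definition yy : imat := imul (imul x2 xx) (iinv x2).

(* Main.v *)
From Pilot Require Import Defs.
From mathcomp Require Import all_boot all_order all_algebra.
From mathcomp Require Import zify.
From Stdlib Require Import FunctionalExtensionality.
Import GRing.Theory.
Local Open Scope ring_scope.

Lemma char2 : (2 \in [pchar 'F_2])%N. Proof. exact: (@pchar_Fp 2). Qed.
Lemma blk_addxx (A : blk) : A + A = 0.
Proof. apply/matrixP=> i j; rewrite !mxE; apply: addrr_pchar2; exact: (@pchar_Fp 2). Qed.
Lemma blk_opp (A : blk) : - A = A.
Proof. apply/matrixP=> i j; rewrite !mxE; apply: oppr_pchar2; exact: (@pchar_Fp 2). Qed.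

Definition low (X : imat) := forall r s, (s < r)%N -> X r s = 0.
Definition per (X : imat) := forall r s, X (r + 3)%N (s + 3)%N = X r s.

Lemma imul_low X Y : low (imul X Y).
Proof. by move=> r s h; rewrite /imul big_geq. Qed.

Lemma imul_per X Y : per X -> per Y -> per (imul X Y).
Proof.
move=> hX hY r s; rewrite /imul -addSn big_addn addnK.
by apply: eq_bigr => t _; rewrite hX hY.
Qed.

Lemma imul_diag X Y : X =2 X -> forall r, imul X Y r r = X r r *m Y r r.
Proof. by move=> _ r; rewrite /imul big_nat1. Qed.

Lemma group_mul X Y : in_group X -> in_group Y -> in_group (imul X Y).
Proof.
case=> d1 l1 p1 [d2 l2 p2]; split.
- by move=> r; rewrite /imul big_nat1 d1 d2 mul1mx.
- exact: imul_low.
- exact: imul_per.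
Qed.

Lemma tri_exchange (V : nmodType) (F : nat -> nat -> V) r n :
  \sum_(r <= u < n) \sum_(r <= t < u.+1) F t u = \sum_(r <= t < n) \sum_(t <= u < n) F t u.
Proof.
elim: n => [|n IH]; first by rewrite !big_geq.
case: (leqP r n) => hrn; last by rewrite !big_geq.
rewrite big_nat_recr //= IH.
rewrite [RHS](eq_big_nat _ _ (F2 := fun t => \sum_(t <= u < n) F t u + F t n)); last first.
  by move=> t /andP[_ ht]; rewrite big_nat_recr.
rewrite big_split /= big_nat_recr //=; congr (_ + _).
by rewrite big_nat_recr //= [X in _ = _ + X]big_geq // addr0.
Qed.

Lemma imulA X Y Z : imul (imul X Y) Z = imul X (imul Y Z).
Proof.
apply: functional_extensionality => r; apply: functional_extensionality => s.
rewrite /imul.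
under eq_bigr => u _ do rewrite mulmx_suml.
under [RHS]eq_bigr => t _ do rewrite mulmx_sumr.
rewrite tri_exchange; apply: eq_bigr => t _; apply: eq_bigr => u _.
by rewrite mulmxA.
Qed.

Lemma ione_low : low ione.
Proof. by move=> r s h; rewrite /ione ifN // neq_ltn h orbT. Qed.

Lemma imul1 Y : low Y -> imul ione Y = Y.
Proof.
move=> hY; apply: functional_extensionality => r; apply: functional_extensionality => s.
rewrite /imul; case: (leqP r s) => h.
- rewrite big_ltn ?ltnS // /ione eqxx mul1mx big_nat_cond big1 ?addr0 // => t /andP[/andP[ht _] _].
  by rewrite ifN ?mul0mx // neq_ltn ht.
- by rewrite big_geq // hY.
Qed.

Lemma imul_1 Y : low Y -> imul Y ione = Y.
Proof.
move=> hY; apply: functional_extensionality => r; apply: functional_extensionality => s.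
rewrite /imul; case: (leqP r s) => h.
- rewrite big_nat_recr //= /ione eqxx mulmx1 big_nat_cond big1 ?add0r // => t /andP[/andP[_ ht] _].
  by rewrite ifN ?mulmx0 // neq_ltn ht.
- by rewrite big_geq // hY.
Qed.

Lemma ipow_low X n : low (ipow X n).
Proof. case: n => [|n]; [exact: ione_low | exact: imul_low]. Qed.

Lemma ipowD X a b : ipow X (a + b) = imul (ipow X a) (ipow X b).
Proof.
elim: a => [|a IH]; first by rewrite add0n /= imul1 //; exact: ipow_low.
by rewrite addSn /= IH imulA.
Qed.

Lemma ione_per : per ione.
Proof. by move=> r s; rewrite /ione eqn_add2r. Qed.

Lemma ipow_per X n : per X -> per (ipow X n).
Proof. move=> hX; elim: n => [|n IH]; [exact: ione_per | exact: imul_per]. Qed.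

Lemma big_only (V : nmodType) a b j (F : nat -> V) : (a <= j < b)%N ->
  (forall t, (a <= t < b)%N -> t != j -> F t = 0) -> \sum_(a <= t < b) F t = F j.
Proof.
move=> /andP[h1 h2] hF.
rewrite (big_cat_nat (n := j)) ?(ltnW h2) //= [X in _ + X]big_ltn //=.
have -> : \sum_(a <= t < j) F t = 0.
  by rewrite big_nat_cond big1 // => t /andP[/andP[t1 t2] _]; apply: hF; lia.
have -> : \sum_(j.+1 <= t < b) F t = 0.
  by rewrite big_nat_cond big1 // => t /andP[/andP[t1 t2] _]; apply: hF; lia.
by rewrite add0r addr0.
Qed.

Lemma imul_sq_mid Y r k : in_group Y -> (0 < k)%N ->
  imul Y Y r (r + k)%N = \sum_(r.+1 <= t < r + k) Y r t *m Y t (r + k)%N.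
Proof.
case=> d l p hk; rewrite /imul big_ltn ?ltnS ?leq_addr // big_nat_recr /=; last by lia.
by rewrite !d mul1mx mulmx1 addrCA blk_addxx addr0.
Qed.

Lemma sq_lemma (Y : imat) (m : nat) (C D : nat -> blk) :
  in_group Y -> (0 < m)%N ->
  (forall r k, (1 <= k < m)%N -> Y r (r + k)%N = 0) ->
  (forall r, Y r (r + m)%N = C r) -> (forall r, Y r (r + m.+1)%N = D r) ->
  [/\ in_group (imul Y Y),
      forall r k, (1 <= k < m.*2)%N -> imul Y Y r (r + k)%N = 0,
      forall r, imul Y Y r (r + (m + m))%N = C r *m C (r + m)%N
    & forall r, imul Y Y r (r + (m + m).+1)%N = C r *m D (r + m)%N + D r *m C (r + m.+1)%N].
Proof.
move=> hG hm hZ hC hD; rewrite -!addnn.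
have hz : forall u v, (u < v)%N -> (v < u + m)%N -> Y u v = 0.
  move=> u v h1 h2; have -> : v = (u + (v - u))%N by lia.
  apply: hZ; lia.
split.
- exact: group_mul.
- move=> r k hk; rewrite imul_sq_mid //; last by lia.
  rewrite big_nat_cond big1 // => t /andP[/andP[t1 t2] _].
  case: (ltnP t (r + m)) => ht; first by rewrite (hz r t) ?mul0mx //; lia.
  by rewrite (hz t (r + k)%N) ?mulmx0 //; lia.
- move=> r; rewrite imul_sq_mid //; last by lia.
  rewrite (@big_only _ _ _ (r + m)%N); last first.
  + move=> t ht htj; case: (ltnP t (r + m)) => h; first by rewrite (hz r t) ?mul0mx //; lia.
    by rewrite (hz t (r + (m + m))%N) ?mulmx0 //; lia.
  + lia.
  + by rewrite hC addnA hC.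
- move=> r; rewrite imul_sq_mid //.
  rewrite (big_cat_nat _ (n := (r + m.+1)%N)); try lia.
  rewrite (@big_only _ _ _ (r + m)%N); last first.
  + move=> t ht htj; rewrite (hz r t) ?mul0mx //; lia.
  + lia.
  rewrite (@big_only _ _ _ (r + m.+1)%N); last first.
  + move=> t ht htj; rewrite (hz t (r + (m + m).+1)%N) ?mulmx0 //; lia.
  + lia.
  rewrite hC hD.
  have e1 : Y (r + m)%N (r + (m + m).+1)%N = D (r + m)%N.
    by rewrite -hD; congr Y; lia.
  have e2 : Y (r + m.+1)%N (r + (m + m).+1)%N = C (r + m.+1)%N.
    by rewrite -hC; congr Y; lia.
  by rewrite e1 e2.
Qed.

Lemma step X n c d c' d' : isM (2^n - 1) [:: c; d] (ipow X (2^n)) ->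
  (forall r, dec_diag c r *m dec_diag c (r + 2^n)%N = dec_diag c' r) ->
  (forall r, dec_diag c r *m dec_diag d (r + 2^n)%N
             + dec_diag d r *m dec_diag c (r + (2^n).+1)%N = dec_diag d' r) ->
  isM (2^n.+1 - 1) [:: c'; d'] (ipow X (2^n.+1)).
Proof.
move=> [hG hZ hV] hc hd.
have hm : (0 < 2^n)%N by rewrite expn_gt0.
have e : (2^n.+1 = 2^n + 2^n)%N by rewrite expnS mul2n addnn.
rewrite e ipowD.
have h1 : forall r k, (1 <= k < 2^n)%N -> ipow X (2^n) r (r + k)%N = 0.
  by move=> r k hk; apply: hZ; lia.
have h2 : forall r, ipow X (2^n) r (r + 2^n)%N = dec_diag c r.
  move=> r; have := hV r 1 isT.
  by have -> : (r + (2^n - 1) + 1 = r + 2^n)%N by lia.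
have h3 : forall r, ipow X (2^n) r (r + (2^n).+1)%N = dec_diag d r.
  move=> r; have := hV r 2 isT.
  by have -> : (r + (2^n - 1) + 2 = r + (2^n).+1)%N by lia.
have [G' Z' C' D'] := sq_lemma _ _ _ _ hG hm h1 h2 h3.
rewrite -addnn in Z' C' D'.
split => //.
- by move=> r k hk; apply: Z'; lia.
- move=> r k /andP[k1 k2]; case: k k1 k2 => [|[|[|k]]] //= _ _.
  + have -> : (r + (2^n + 2^n - 1) + 1 = r + (2^n + 2^n))%N by lia.
    by rewrite C' hc.
  + have -> : (r + (2^n + 2^n - 1) + 2 = r + (2^n + 2^n).+1)%N by lia.
    by rewrite D' hd.
Qed.

Lemma dd_add t r a : dec_diag t (r + a) = dec_diag t (r %% 3 + a).
Proof. by rewrite /dec_diag modnDml. Qed.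
Lemma dd_0 t r : dec_diag t r = dec_diag t (r %% 3 + 0).
Proof. by rewrite addn0 /dec_diag modn_mod. Qed.
Lemma dd_S1 t r : dec_diag t r.+1 = dec_diag t (r %% 3 + 1).
Proof. by rewrite -dd_add addn1. Qed.
Lemma dd_S2 t r : dec_diag t r.+2 = dec_diag t (r %% 3 + 2).
Proof. by rewrite -dd_add addn2. Qed.
Lemma dd_congr t r a b : (a %% 3 = b %% 3)%N -> dec_diag t (r + a) = dec_diag t (r + b).
Proof. by move=> h; rewrite /dec_diag -modnDmr h modnDmr. Qed.

Ltac mxcomp := apply/matrixP; case => [[|[|[|?]]] ?] //; case => [[|[|[|?]]] ?] //;
  rewrite !mxE ?big_ord_recr ?big_ord0 /= ?mxE; apply/eqP; vm_compute; reflexivity.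

Ltac resid r := rewrite ?(dd_add _ r) ?(dd_S2 _ r) ?(dd_S1 _ r) ?(dd_0 _ r);
  have := ltn_pmod r (isT : (0 < 3)%N);
  case: (r %% 3)%N => [|[|[|?]]] // _; rewrite /dec_diag /=; mxcomp.


Local Notation iinv := Pilot.Defs.iinv.

Lemma imul_e1 A B r : imul A B r r.+1 = A r r *m B r r.+1 + A r r.+1 *m B r.+1 r.+1.
Proof.
rewrite /imul big_nat_recr /=; last by lia.
by rewrite big_nat_recr //= big_geq // add0r.
Qed.

Lemma imul_e2 A B r : imul A B r r.+2 =
  A r r *m B r r.+2 + A r r.+1 *m B r.+1 r.+2 + A r r.+2 *m B r.+2 r.+2.
Proof.
rewrite /imul big_nat_recr /=; last by lia.
rewrite big_nat_recr /=; last by lia.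
by rewrite big_nat_recr //= big_geq // add0r.
Qed.

Lemma gm_e1 A B r : in_group A -> in_group B -> imul A B r r.+1 = B r r.+1 + A r r.+1.
Proof. by case=> dA _ _ [dB _ _]; rewrite imul_e1 dA dB mul1mx mulmx1. Qed.

Lemma gm_e2 A B r : in_group A -> in_group B ->
  imul A B r r.+2 = B r r.+2 + A r r.+1 *m B r.+1 r.+2 + A r r.+2.
Proof. by case=> dA _ _ [dB _ _]; rewrite imul_e2 dA dB mul1mx mulmx1. Qed.

Definition nX (X : imat) : imat := fun r s => if r == s then 0 else - X r s.

Lemma nX_low X : in_group X -> low (nX X).
Proof. by case=> _ l _ r s h; rewrite /nX l // oppr0 if_same. Qed.

Lemma nX_per X : in_group X -> per (nX X).
Proof. by case=> _ _ p r s; rewrite /nX eqn_add2r p. Qed.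

Lemma iinvE X r s : iinv X r s = \sum_(k < (s - r).+1) ipow (nX X) k r s.
Proof. by []. Qed.

Lemma group_iinv X : in_group X -> in_group (iinv X).
Proof.
move=> hX; split.
- by move=> r; rewrite iinvE subnn big_ord1 /= /ione eqxx.
- move=> r s h; rewrite iinvE (_ : s - r = 0)%N; last by lia.
  by rewrite big_ord1 /= /ione ifN //; rewrite neq_ltn h orbT.
- move=> r s; rewrite !iinvE subnDr; apply: eq_bigr => k _.
  by apply: ipow_per; apply: nX_per.
Qed.

Lemma neqS r : (r == r.+1) = false.
Proof. by elim: r. Qed.
Lemma neqSS r : (r == r.+2) = false.
Proof. by elim: r. Qed.

Lemma iinv_e1 X r : in_group X -> iinv X r r.+1 = X r r.+1.
Proof.
move=> hX; rewrite iinvE subSnn !big_ord_recr big_ord0 /=.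
rewrite imul_1; last exact: nX_low.
by rewrite /ione /nX /= !neqS add0r add0r blk_opp.
Qed.

Lemma iinv_e2 X r : in_group X -> iinv X r r.+2 = X r r.+2 + X r r.+1 *m X r.+1 r.+2.
Proof.
move=> hX; rewrite iinvE (_ : r.+2 - r = 2)%N; last by lia.
rewrite !big_ord_recr big_ord0 /= !imul_1; try exact: nX_low.
rewrite imul_e2 /ione /nX /= !eqxx !neqS neqSS !mul0mx mulmx0 !add0r addr0 !blk_opp.
done.
Qed.

Lemma M0_group cs : in_group (M0 cs).
Proof.
split.
- by move=> r; rewrite /M0 eqxx.
- move=> r s h; rewrite /M0 ifN ?ifN //; first by rewrite -leqNgt ltnW.
  by rewrite neq_ltn h orbT.
- move=> r s; rewrite /M0 eqn_add2r ltn_add2r subnDr.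
  by rewrite /dec_diag modnDr.
Qed.

Lemma M0_1 cs r : (0 < size cs)%N -> M0 cs r r.+1 = dec_diag (nth (0,0,0)%N cs 0) r.
Proof. by move=> h; rewrite /M0 neqS ltnSn subSnn h. Qed.

Lemma M0_2 cs r : (1 < size cs)%N -> M0 cs r r.+2 = dec_diag (nth (0,0,0)%N cs 1) r.
Proof.
by move=> h; rewrite /M0 neqSS (_ : r < r.+2)%N // (_ : r.+2 - r = 2)%N ?h //; lia.
Qed.

Lemma g0 : in_group x0. Proof. exact: M0_group. Qed.
Lemma g1 : in_group x1. Proof. exact: M0_group. Qed.
Lemma g2 : in_group x2. Proof. exact: M0_group. Qed.
Lemma g01 : in_group (imul x0 x1). Proof. exact: group_mul g0 g1. Qed.
Lemma gx : in_group xx.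
Proof. exact: group_iinv g01. Qed.
Lemma gx2i : in_group (iinv x2).
Proof. exact: group_iinv g2. Qed.
Lemma gq : in_group (imul x2 xx). Proof. exact: group_mul g2 gx. Qed.
Lemma gy : in_group yy.
Proof. exact: group_mul gq gx2i. Qed.

Lemma xx_1 r : xx r r.+1 = dec_diag (28,235,129)%N r.
Proof.
rewrite /xx (iinv_e1 _ _ g01) (gm_e1 _ _ _ g0 g1) /x0 /x1 !M0_1 //.
resid r.
Qed.

Lemma xx_2 r : xx r r.+2 = dec_diag (29,211,263)%N r.
Proof.
rewrite /xx (iinv_e2 _ _ g01) (gm_e2 _ _ _ g0 g1) !(gm_e1 _ _ _ g0 g1) /x0 /x1 !M0_1 // !M0_2 //.
resid r.
Qed.

Lemma yy_1 r : yy r r.+1 = dec_diag (28,235,129)%N r.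
Proof.
rewrite /yy (gm_e1 _ _ _ gq gx2i) (iinv_e1 _ _ g2) (gm_e1 _ _ _ g2 gx) xx_1 /x2 !M0_1 //.
resid r.
Qed.

Lemma yy_2 r : yy r r.+2 = dec_diag (58,3,445)%N r.
Proof.
rewrite /yy (gm_e2 _ _ _ gq gx2i) (iinv_e2 _ _ g2) (iinv_e1 _ _ g2) (gm_e1 _ _ _ g2 gx).
rewrite (gm_e2 _ _ _ g2 gx) !xx_1 xx_2 /x2 !M0_1 // !M0_2 //.
resid r.
Qed.

Lemma pow_even j : (2 ^ (2 * j) %% 3 = 1)%N.
Proof. by rewrite expnM -modnXm (_ : 2 ^ 2 %% 3 = 1)%N // exp1n. Qed.
Lemma pow_odd j : (2 ^ (2 * j).+1 %% 3 = 2)%N.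
Proof. by rewrite expnS -modnMmr pow_even. Qed.

Arguments step {X n c d c' d'}.

Lemma step_even X j c d c' d' : isM (2^(2*j) - 1) [:: c; d] (ipow X (2^(2*j))) ->
  (forall r, dec_diag c r *m dec_diag c (r + 1) = dec_diag c' r) ->
  (forall r, dec_diag c r *m dec_diag d (r + 1) + dec_diag d r *m dec_diag c (r + 2) = dec_diag d' r) ->
  isM (2^(2*j).+1 - 1) [:: c'; d'] (ipow X (2^(2*j).+1)).
Proof.
move=> h hc hd; apply: (step h) => r.
- by rewrite (dd_congr _ _ _ 1) ?hc // pow_even.
- rewrite (dd_congr _ _ _ 1) ?(dd_congr _ _ (2^(2*j)).+1 2) ?hd //.
  + by rewrite -addn1 -modnDml pow_even.
  + by rewrite pow_even.
Qed.

Arguments step_even {X j c d c' d'}.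

Lemma step_odd X j c d c' d' : isM (2^(2*j).+1 - 1) [:: c; d] (ipow X (2^(2*j).+1)) ->
  (forall r, dec_diag c r *m dec_diag c (r + 2) = dec_diag c' r) ->
  (forall r, dec_diag c r *m dec_diag d (r + 2) + dec_diag d r *m dec_diag c (r + 0) = dec_diag d' r) ->
  isM (2^(2*j).+2 - 1) [:: c'; d'] (ipow X (2^(2*j).+2)).
Proof.
move=> h hc hd; apply: (step h) => r.
- by rewrite (dd_congr _ _ _ 2) ?hc // pow_odd.
- rewrite (dd_congr _ _ _ 2) ?(dd_congr _ _ (2^(2*j).+1).+1 0) ?hd //.
  + by rewrite -addn1 -modnDml pow_odd.
  + by rewrite pow_odd.
Qed.

Arguments step_odd {X j c d c' d'}.

Lemma TcA r : dec_diag (28,235,129)%N r *m dec_diag (28,235,129)%N (r + 1) = dec_diag (51,89,196)%N r.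
Proof. resid r. Qed.
Lemma TcB r : dec_diag (51,89,196)%N r *m dec_diag (51,89,196)%N (r + 2) = dec_diag (28,235,129)%N r.
Proof. resid r. Qed.
Lemma Tx0 r : dec_diag (28,235,129)%N r *m dec_diag (29,211,263)%N (r + 1)
   + dec_diag (29,211,263)%N r *m dec_diag (28,235,129)%N (r + 2) = dec_diag (0,0,0)%N r.
Proof. resid r. Qed.
Lemma TxA r : dec_diag (28,235,129)%N r *m dec_diag (0,0,0)%N (r + 1)
   + dec_diag (0,0,0)%N r *m dec_diag (28,235,129)%N (r + 2) = dec_diag (0,0,0)%N r.
Proof. resid r. Qed.
Lemma TxB r : dec_diag (51,89,196)%N r *m dec_diag (0,0,0)%N (r + 2)
   + dec_diag (0,0,0)%N r *m dec_diag (51,89,196)%N (r + 0) = dec_diag (0,0,0)%N r.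
Proof. resid r. Qed.
Lemma Ty0 r : dec_diag (28,235,129)%N r *m dec_diag (58,3,445)%N (r + 1)
   + dec_diag (58,3,445)%N r *m dec_diag (28,235,129)%N (r + 2) = dec_diag (0,157,106)%N r.
Proof. resid r. Qed.
Lemma TyA r : dec_diag (28,235,129)%N r *m dec_diag (39,208,186)%N (r + 1)
   + dec_diag (39,208,186)%N r *m dec_diag (28,235,129)%N (r + 2) = dec_diag (0,157,106)%N r.
Proof. resid r. Qed.
Lemma TyB r : dec_diag (51,89,196)%N r *m dec_diag (0,157,106)%N (r + 2)
   + dec_diag (0,157,106)%N r *m dec_diag (51,89,196)%N (r + 0) = dec_diag (39,208,186)%N r.
Proof. resid r. Qed.

Lemma base_x : isM (2^(2*0) - 1) [:: (28,235,129); (29,211,263)]%N (ipow xx (2^(2*0))).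
Proof.
have -> : ipow xx (2^(2*0)) = imul xx ione by [].
have -> : (2^(2*0) - 1 = 0)%N by [].
rewrite imul_1; last by case: gx.
split; first exact: gx.
- by move=> r k hk; exfalso; lia.
- move=> r [|[|[|k]]] //= _; rewrite addn0 ?addn1 ?addn2; [exact: xx_1 | exact: xx_2].
Qed.

Lemma base_y : isM (2^(2*0) - 1) [:: (28,235,129); (58,3,445)]%N (ipow yy (2^(2*0))).
Proof.
have -> : ipow yy (2^(2*0)) = imul yy ione by [].
have -> : (2^(2*0) - 1 = 0)%N by [].
rewrite imul_1; last by case: gy.
split; first exact: gy.
- by move=> r k hk; exfalso; lia.
- move=> r [|[|[|k]]] //= _; rewrite addn0 ?addn1 ?addn2; [exact: yy_1 | exact: yy_2].
Qed.

Lemma main j :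
  [/\ isM (2^(2*j).+1 - 1) [:: (51,89,196); (0,0,0)]%N (ipow xx (2^(2*j).+1)),
      isM (2^(2*j).+1 - 1) [:: (51,89,196); (0,157,106)]%N (ipow yy (2^(2*j).+1)),
      isM (2^(2*j).+2 - 1) [:: (28,235,129); (0,0,0)]%N (ipow xx (2^(2*j).+2))
    & isM (2^(2*j).+2 - 1) [:: (28,235,129); (39,208,186)]%N (ipow yy (2^(2*j).+2))].
Proof.
elim: j => [|j [h1 h2 h3 h4]].
- have a1 := step_even base_x TcA Tx0.
  have a2 := step_even base_y TcA Ty0.
  split; [exact: a1 | exact: a2 | exact: step_odd a1 TcB TxB | exact: step_odd a2 TcB TyB].
- have e : (2 * j.+1 = (2 * j).+2)%N by lia.
  rewrite e.
  have a1 := step_even (j := j.+1) (X := xx) (c' := (51,89,196)%N) (d' := (0,0,0)%N).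
  rewrite e in a1; have {}a1 := a1 _ _ h3 TcA TxA.
  have a2 := step_even (j := j.+1) (X := yy) (c' := (51,89,196)%N) (d' := (0,157,106)%N).
  rewrite e in a2; have {}a2 := a2 _ _ h4 TcA TyA.
  have b1 := step_odd (j := j.+1) (X := xx) (c' := (28,235,129)%N) (d' := (0,0,0)%N).
  rewrite e in b1.
  have b2 := step_odd (j := j.+1) (X := yy) (c' := (28,235,129)%N) (d' := (39,208,186)%N).
  rewrite e in b2.
  split; [exact: a1 | exact: a2 | exact: b1 _ _ a1 TcB TxB | exact: b2 _ _ a2 TcB TyB].
Qed.

Theorem proposition4p1 : forall j : nat,
  [/\ isM (2 ^ (2 * j + 1) - 1) [:: (51, 89, 196); (0, 0, 0)] (ipow xx (2 ^ (2 * j + 1))),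
      isM (2 ^ (2 * j + 1) - 1) [:: (51, 89, 196); (0, 157, 106)] (ipow yy (2 ^ (2 * j + 1))),
      isM (2 ^ (2 * j + 2) - 1) [:: (28, 235, 129); (0, 0, 0)] (ipow xx (2 ^ (2 * j + 2)))
    & isM (2 ^ (2 * j + 2) - 1) [:: (28, 235, 129); (39, 208, 186)] (ipow yy (2 ^ (2 * j + 2)))]%N.
Proof. by move=> j; rewrite addn1 addn2; exact: main. Qed.
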